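(* For any generalized causal teams $S$ and $T$ over a signature $\sigma$: $S\models^g\bigvee_{\mathcal F\in\mathbb F_\sigma}\big(\Theta^{(T^{\mathcal F})^-}\wedge\Phi^{\mathcal F}\big)$ if and only if $S\preccurlyeq T$.
   Context: A signature $\sigma=(\mathrm{Dom},\mathrm{Ran})$: $\mathrm{Dom}$ nonempty finite set of variables, each with nonempty finite range $\mathrm{Ran}(X)$; $\mathbf X=\mathbf x$ abbreviates $X_1=x_1\wedge\dots\wedge X_n=x_n$ ($\mathbf x\in\prod\mathrm{Ran}(X_i)$), inconsistent if it contains $X=x,X=x'$ with $x\ne x'$. $\mathcal{CO}[\sigma]$: $\alpha::=X=x\mid\neg\alpha\mid\alpha\wedge\alpha\mid\alpha\vee\alpha\mid\mathbf X=\mathbf x\;\Box\!\!\rightarrow\alpha$; $\alpha\supset\beta$ abbreviates $\neg\alpha\vee\beta$; $\bot$ abbreviates $X=x\wedge\neg(X=x)$. Systems of functions $\mathcal F$: for each $V\in\mathrm{En}(\mathcal F)\subseteq\mathrm{Dom}$ parents $PA^{\mathcal F}_V\subseteq\mathrm{Dom}\setminus\{V\}$ and $\mathcal F_V:\mathrm{Ran}(PA^{\mathcal F}_V)\to\mathrm{Ran}(V)$; $\mathrm{Ex}(\mathcal F)=\mathrm{Dom}\setminus\mathrm{En}(\mathcal F)$; only recursive (acyclic parent graph), forming the finite set $\mathbb F_\sigma$. An assignment $s$ is compatible with $\mathcal F$ if $s(V)=\mathcal F_V(s(PA^{\mathcal F}_V))$ for $V\in\mathrm{En}(\mathcal F)$.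 A generalized causal team is a set $T$ of compatible pairs $(s,\mathcal F)$ with $\mathcal F\in\mathbb F_\sigma$; causal subteams are subsets; $T^-=\{s:(s,\mathcal F)\in T\}$. For consistent $\mathbf X=\mathbf x$: $\mathcal F_{\mathbf X=\mathbf x}$ restricts $\mathcal F$ to $\mathrm{En}(\mathcal F)\setminus\mathbf X$; $s^{\mathcal F}_{\mathbf X=\mathbf x}$: $X_i\mapsto x_i$, $V\mapsto s(V)$ on $\mathrm{Ex}(\mathcal F)\setminus\mathbf X$, $V\mapsto\mathcal F_V(s^{\mathcal F}_{\mathbf X=\mathbf x}(PA^{\mathcal F}_V))$ on $\mathrm{En}(\mathcal F)\setminus\mathbf X$; $T_{\mathbf X=\mathbf x}=\{(s^{\mathcal F}_{\mathbf X=\mathbf x},\mathcal F_{\mathbf X=\mathbf x}):(s,\mathcal F)\in T\}$. $\models^g$: $T\models X=x$ iff $s(X)=x$ for all $s\in T^-$; $T\models\neg\alpha$ iff $\{(s,\mathcal F)\}\not\models\alpha$ for all $(s,\mathcal F)\in T$; $\wedge$ classical; $T\models\alpha\vee\beta$ iff $T=T_1\cup T_2$ with $T_1\models\alpha$, $T_2\models\beta$ (an empty $\vee$-disjunction is $\bot$); $T\models\mathbf X=\mathbf x\;\Box\!\!\rightarrow\alpha$ iff $\mathbf X=\mathbf x$ inconsistent or $T_{\mathbf X=\mathbf x}\models\alpha$. $\mathrm{Cn}(\mathcal F)=\{V\in\mathrm{En}(\mathcal F):\mathcal F_V\text{ constant}\}$; $\mathcal F_V\sim\mathcal G_V$ iff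 $\mathcal F_V(\mathbf x\mathbf y)=\mathcal G_V(\mathbf x\mathbf z)$ for all $\mathbf x\in\mathrm{Ran}(PA^{\mathcal F}_V\cap PA^{\mathcal G}_V)$, $\mathbf y\in\mathrm{Ran}(PA^{\mathcal F}_V\setminus PA^{\mathcal G}_V)$, $\mathbf z\in\mathrm{Ran}(PA^{\mathcal G}_V\setminus PA^{\mathcal F}_V)$; $\mathcal F\sim\mathcal G$ iff $\mathrm{En}(\mathcal F)\setminus\mathrm{Cn}(\mathcal F)=\mathrm{En}(\mathcal G)\setminus\mathrm{Cn}(\mathcal G)$ and $\mathcal F_V\sim\mathcal G_V$ for each such $V$. $T^{\mathcal F}=\{(s,\mathcal G)\in T:\mathcal G\sim\mathcal F\}$; $S\approx T$ iff $(S^{\mathcal F})^-=(T^{\mathcal F})^-$ for all $\mathcal F\in\mathbb F_\sigma$; $S\preccurlyeq T$ iff $S\approx R$ for some $R\subseteq T$ (and $\emptyset\preccurlyeq T$ always). $\Theta^{A}:=\bigvee_{s\in A}\bigwedge_{V\in\mathrm{Dom}}V=s(V)$ for a set $A$ of assignments ($\bot$ if $A=\emptyset$). With $\mathbf W_V$ listing $\mathrm{Dom}\setminus\{V\}$: $\Phi^{\mathcal F}:=\bigwedge_{V\in\mathrm{En}(\mathcal F)\setminus\mathrm{Cn}(\mathcal F)}\eta(V)\wedge\bigwedge_{V\notin\mathrm{En}(\mathcal F)\setminus\mathrm{Cn}(\mathcal F)}\xi(V)$, where $\eta(V)$ is the conjunction of all $(\mathbf W=\mathbf w\wedge PA^{\mathcal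 F}_V=\mathbf p)\;\Box\!\!\rightarrow V=\mathcal F_V(\mathbf p)$ ($\mathbf W$ listing $\mathrm{Dom}\setminus(PA^{\mathcal F}_V\cup\{V\})$, $\mathbf w\in\mathrm{Ran}(\mathbf W)$, $\mathbf p\in\mathrm{Ran}(PA^{\mathcal F}_V)$) and $\xi(V)$ is the conjunction of all $V=v\supset(\mathbf W_V=\mathbf w\;\Box\!\!\rightarrow V=v)$ ($v\in\mathrm{Ran}(V)$, $\mathbf w\in\mathrm{Ran}(\mathbf W_V)$). *)

(* Defs.v *)
From mathcomp Require Import all_boot.

Record signature := Signature {
  var : finType;
  ran : var -> finType;
  var0 : var;
  ran0 : forall X : var, ran X }.

Set Implicit Arguments.
Unset Strict Implicit.
Unset Printing Implicit Defensive.

Section CO.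
Variable sg : signature.
Local Notation V := (var sg).
Local Notation Ran := (ran sg).

Definition assn := {dffun forall v : V, Ran v}.

Definition atom := {X : V & Ran X}.

(* Syntax of CO[sigma].  An intervention antecedent X = x is a sequence of
   atoms (X_1 = x_1 /\ ... /\ X_n = x_n). *)
Inductive form :=
| FEq (X : V) (x : Ran X)
| FNeg (a : form)
| FAnd (a b : form)
| FOr (a b : form)
| FCf (xs : seq atom) (a : form).

Definition FImp (a b : form) := FOr (FNeg a) b.
Definition FBot : form := FAnd (FEq (@ran0 sg (var0 sg))) (FNeg (FEq (@ran0 sg (var0 sg)))).

Fixpoint bigOr (l : seq form) : form :=
  match l with
  | [::] => FBot
  | [:: a] => a
  | a :: l' => FOr a (bigOr l')
  end.
(* (the empty conjunction never occurs below since all ranges and Dom are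
   nonempty; we use bottom as a dummy value) *)
Fixpoint bigAnd (l : seq form) : form :=
  match l with
  | [::] => FBot
  | [:: a] => a
  | a :: l' => FAnd a (bigAnd l')
  end.

(* F_V is encoded as a function of the
   whole assignment that (for V in En) depends only on the PA_V coordinates;
   outside En the data is fixed to a canonical default. *)
Definition sys := ({set V} * {ffun V -> {set V}} * {dffun forall v : V, {ffun assn -> Ran v}})%type.
Definition En (F : sys) : {set V} := F.1.1.
Definition PA (F : sys) (v : V) : {set V} := F.1.2 v.
Definition Fn (F : sys) (v : V) : assn -> Ran v := fun s => F.2 v s.

Definition parent_rel (F : sys) : rel V := fun a b => a \in PA F b.

Definition valid (F : sys) : bool :=
  [&& [forall v, v \notin PA F v],
      [forall v, (v \notin En F) ==> (PA F v == set0) && (F.2 v == [ffun s : assn => s v])],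
      [forall v, (v \in En F) ==>
          [forall s : assn, forall t : assn,
             [forall u in PA F v, s u == t u] ==> (Fn F v s == Fn F v t)]] &
      [forall u, forall v, (u \in PA F v) ==> ~~ connect (parent_rel F) v u]].

Definition Fsigma : seq sys := [seq F <- enum {: sys} | valid F].

Definition compatible (s : assn) (F : sys) : bool :=
  [forall v, (v \in En F) ==> (s v == Fn F v s)].

Definition team := {set assn * sys}.

Definition gcteam (T : team) : Prop :=
  forall p, p \in T -> valid p.2 /\ compatible p.1 p.2.

Definition Tminus (T : team) : {set assn} := [set p.1 | p in T].

Definition in_dom (xs : seq atom) (v : V) : bool := has (fun a => tag a == v) xs.
Definition consistent (xs : seq atom) : bool :=
  all (fun a => all (fun b => (tag a == tag b) ==> (a == b)) xs) xs.

Definition interv_sys (xs : seq atom) (F : sys) : sys :=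
  let En' := [set v in En F | ~~ in_dom xs v] in
  (En', [ffun v => if v \in En' then PA F v else set0],
   [ffun v => if v \in En' then F.2 v else [ffun s : assn => s v]]).

(* s^F_{X=x}: the (unique, by recursiveness) assignment t with t(X_i) = x_i,
   t(V) = s(V) for exogenous V not in X, t(V) = F_V(t(PA_V)) for endogenous V
   not in X. *)
Definition interv_cond (xs : seq atom) (s : assn) (F : sys) (t : assn) : bool :=
  [forall v, if in_dom xs v then Tagged Ran (t v) \in xs
             else if v \in En F then t v == Fn F v t
             else t v == s v].
Definition interv_assn (xs : seq atom) (s : assn) (F : sys) : assn :=
  odflt s [pick t | interv_cond xs s F t].

Definition interv (xs : seq atom) (T : team) : team :=
  [set (interv_assn xs p.1 p.2, interv_sys xs p.2) | p in T].

Fixpoint sat (T : team) (a : form) : Prop :=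
  match a with
  | FEq X x => forall p, p \in T -> p.1 X = x
  | FNeg b => forall p, p \in T -> ~ sat [set p] b
  | FAnd b c => sat T b /\ sat T c
  | FOr b c => exists T1 T2, T = T1 :|: T2 /\ sat T1 b /\ sat T2 c
  | FCf xs b => ~~ consistent xs \/ sat (interv xs T) b
  end.

Definition Cn (F : sys) : {set V} :=
  [set v in En F | [forall s : assn, forall t : assn, Fn F v s == Fn F v t]].
Definition EnCn (F : sys) : {set V} := En F :\: Cn F.

Definition sim_fun (F G : sys) (v : V) : bool :=
  [forall s : assn, forall t : assn,
     [forall u in PA F v :&: PA G v, s u == t u] ==> (Fn F v s == Fn G v t)].
Definition sim (F G : sys) : bool :=
  (EnCn F == EnCn G) && [forall v in EnCn F, sim_fun F G v].

Definition restrF (T : team) (F : sys) : team := [set p in T | sim p.2 F].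

Definition approx (S T : team) : Prop :=
  forall F, valid F -> Tminus (restrF S F) = Tminus (restrF T F).
Definition preceq (S T : team) : Prop :=
  S = set0 \/ exists R : team, R \subset T /\ approx S R.

Definition Theta (A : {set assn}) : form :=
  bigOr [seq bigAnd [seq FEq (s v) | v <- enum V] | s : assn <- enum A].

(* assignments to Dom \ {v} are represented by the assignments s with
   s v = ran0 v (a bijective correspondence) *)
Definition rest_assns (v : V) : seq assn := [seq s : assn <- enum {: assn} | s v == @ran0 sg v].

Definition eta (F : sys) (v : V) : form :=
  bigAnd [seq FCf ([seq Tagged Ran (s u) | u <- enum V & (u \notin PA F v) && (u != v)]
                   ++ [seq Tagged Ran (s u) | u <- enum (PA F v)])
                  (FEq (Fn F v s))
         | s : assn <- rest_assns v].

Definition xi (v : V) : form :=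
  bigAnd [seq FImp (FEq x) (FCf [seq Tagged Ran (s u) | u <- enum V & u != v] (FEq x))
         | x <- enum (Ran v), s : assn <- rest_assns v].

Definition Phi (F : sys) : form :=
  bigAnd [seq if v \in EnCn F then eta F v else xi v | v <- enum V].

Definition bigformula (T : team) : form :=
  bigOr [seq FAnd (Theta (Tminus (restrF T F))) (Phi F) | F <- Fsigma].

End CO.

(* Main.v *)
Require Import Defs.
From mathcomp Require Import all_boot.
Set Implicit Arguments. Unset Strict Implicit. Unset Printing Implicit Defensive.
Set Implicit Arguments.
Fixpoint In' (T : Type) (a : T) (l : seq T) : Prop :=
  match l with [::] => False | b :: l => b = a \/ In' a l end.
 Unset Strict Implicit. Unset Printing Implicit Defensive.

Lemma inP' (T : eqType) (x : T) (s : seq T) : x \in s <-> In' x s.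
Proof. elim: s => [|y s IH] //=; rewrite inE; split.
- by case/orP => [/eqP ->|/IH]; [left|right].
- by case=> [->|/IH ->]; rewrite ?eqxx ?orbT. Qed.

Lemma In_cat (T : Type) (a : T) (s t : seq T) : In' a (s ++ t) -> In' a s \/ In' a t.
Proof. elim: s => [|x s IH] /=; first by right. by case=> [->|/IH [H|H]]; auto. Qed.

Lemma In_flatten (T : Type) (a : T) (L : seq (seq T)) :
  In' a (flatten L) -> exists l, In' l L /\ In' a l.
Proof.
elim: L => [|l L IH] //= H0; case: (In_cat H0) => H; first by exists l; auto.
by case: (IH H) => l' [H1 H2]; exists l'; auto.
Qed.

Lemma In_map (T U : Type) (f : T -> U) x l : In' x l -> In' (f x) (map f l).
Proof. elim: l => [|y l IH] //= [->|H]; auto. Qed.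

Lemma In_map_inv (T U : Type) (f : T -> U) y l : In' y (map f l) -> exists x, In' x l /\ y = f x.
Proof. elim: l => [|x l IH] //= [<-|/IH [z [H1 H2]]]; [exists x|exists z]; auto. Qed.

Lemma sat_set0 sg (a : form sg) : sat set0 a.
Proof.
elim: a => [X x|b IH|b IHb c IHc|b IHb c IHc|xs b IH] /=.
- by move=> p; rewrite inE.
- by move=> p; rewrite inE.
- by split.
- by exists set0, set0; rewrite setU0.
- by right; rewrite /interv imset0.
Qed.

Lemma satFBot sg (T : team sg) p : p \in T -> ~ sat T (FBot sg).
Proof.
move=> pT [/= H1 H2]; apply: (H2 p pT) => q; rewrite inE => /eqP ->; exact: H1.
Qed.

Lemma bigOr_elim sg (l : seq (form sg)) (T : team sg) p :
  sat T (bigOr l) -> p \in T -> exists a, In' a l /\ exists T' : team sg, p \in T' /\ sat T' a.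
Proof.
elim: l T => [|a l IH] T /=.
- by move=> H pT; case: (satFBot pT H).
- case: l IH => [|b l] IH.
  + by move=> H pT; exists a; split; [left|exists T].
  + move=> [T1 [T2 [-> [H1 H2]]]]; rewrite inE => /orP [pT|pT].
    * by exists a; split; [left|exists T1].
    * by case: (IH _ H2 pT) => c [Hc HT]; exists c; split; [right|].
Qed.

Lemma bigOr_intro sg (X : eqType) (g : X -> form sg) (K : X -> team sg) (l : seq X) (T : team sg) :
  T = \bigcup_(x <- l) K x -> (forall x, x \in l -> sat (K x) (g x)) ->
  sat T (bigOr [seq g x | x <- l]).
Proof.
elim: l T => [|x l IH] T /=.
- by rewrite big_nil => -> _; exact (sat_set0 (FBot sg)).
- rewrite big_cons => -> H.
  case: l IH H => [|y l] IH H.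
  + by rewrite big_nil setU0; apply: H; rewrite inE eqxx.
  + exists (K x), (\bigcup_(j <- y :: l) K j); split=> //; split.
    * by apply: H; rewrite inE eqxx.
    * by apply: IH => // z zl; apply: H; rewrite inE zl orbT.
Qed.

Lemma bigAnd_elim sg (l : seq (form sg)) (T : team sg) :
  sat T (bigAnd l) -> forall a, In' a l -> sat T a.
Proof.
elim: l => [|a l IH] //=.
case: l IH => [|b l] IH.
- by move=> H c [<-|].
- by move=> [H1 H2] c [<-|Hc] //; apply: IH.
Qed.

Lemma bigAnd_intro sg (l : seq (form sg)) (T : team sg) :
  l <> [::] -> (forall a, In' a l -> sat T a) -> sat T (bigAnd l).
Proof.
elim: l => [|a l IH] //= _.
case: l IH => [|b l] IH H.
- by apply: H; left.
- split; first by apply: H; left.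
  by apply: IH => // c Hc; apply: H; right.
Qed.

Definition upd sg (w : assn sg) (v : var sg) (c : ran sg v) : assn sg :=
  finfun (dfwith (fun u => w u) c).

Lemma upd_at sg (w : assn sg) v (c : ran sg v) : upd w c v = c.
Proof. by rewrite /upd ffunE dfwith_in. Qed.

Lemma upd_out sg (w : assn sg) v (c : ran sg v) u : u != v -> upd w c u = w u.
Proof. by move=> h; rewrite /upd ffunE dfwith_out // eq_sym. Qed.

Definition mix sg (A : {set var sg}) (s t : assn sg) : assn sg :=
  finfun (fun x => if x \in A then s x else t x).

Lemma mixE sg (A : {set var sg}) s t x : mix A s t x = if x \in A then s x else t x.
Proof. by rewrite /mix ffunE. Qed.

Definition depends sg (X : Type) (f : assn sg -> X) (A : {set var sg}) :=
  forall s t : assn sg, (forall u, u \in A -> s u = t u) -> f s = f t.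

Lemma depends_inter sg X (f : assn sg -> X) A B :
  depends f A -> depends f B -> depends f (A :&: B).
Proof.
move=> hA hB s t h.
rewrite (hA s (mix A s t)); last by move=> u uA; rewrite mixE uA.
apply: hB => u uB; rewrite mixE; case: ifP => // uA; apply: h; by rewrite inE uA uB.
Qed.

Lemma depends_sub sg X (f : assn sg -> X) (A B : {set var sg}) :
  depends f A -> A \subset B -> depends f B.
Proof. by move=> hA /subsetP sAB s t h; apply: hA => u uA; apply: h; apply: sAB. Qed.

Lemma valid_noself sg (F : sys sg) v : valid F -> v \notin PA F v.
Proof. by case/and4P => /forallP h _ _ _. Qed.

Lemma valid_dep sg (F : sys sg) v : valid F -> v \in En F -> depends (Fn F v) (PA F v).
Proof.
case/and4P => _ _ /forallP /(_ v) /implyP h _ /h /forallP hv s t hst.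
apply/eqP; move: (hv s) => /forallP /(_ t) /implyP; apply.
by apply/forall_inP => u uP; apply/eqP; apply: hst.
Qed.

Lemma sim_funE sg (F G : sys sg) v :
  sim_fun F G v <-> (forall s, Fn F v s = Fn G v s) /\ depends (Fn F v) (PA F v :&: PA G v).
Proof.
split.
- move=> /forallP h; split.
  + move=> s; apply/eqP; move: (h s) => /forallP /(_ s) /implyP; apply.
    by apply/forall_inP.
  + move=> s t hst.
    have E : forall s t : assn sg, (forall u, u \in PA F v :&: PA G v -> s u = t u) -> Fn F v s = Fn G v t.
      move=> s' t' h'; apply/eqP; move: (h s') => /forallP /(_ t') /implyP; apply.
      by apply/forall_inP => u uP; apply/eqP; apply: h'.
    by rewrite (E s t hst) -(E t t).
- case=> h1 h2; apply/forallP => s; apply/forallP => t; apply/implyP => /forall_inP h.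
  by apply/eqP; rewrite -h1; apply: h2 => u /h /eqP.
Qed.

Lemma sim_fun_sym sg (F G : sys sg) v : sim_fun F G v -> sim_fun G F v.
Proof.
case/sim_funE => h1 h2; apply/sim_funE; split=> [s|s t hst]; first by rewrite h1.
by rewrite -!h1; apply: h2 => u; rewrite setIC; apply: hst.
Qed.

Lemma sim_fun_trans sg (F G H : sys sg) v : sim_fun F G v -> sim_fun G H v -> sim_fun F H v.
Proof.
case/sim_funE => h1 h2 /sim_funE [h3 h4]; apply/sim_funE; split=> [s|]; first by rewrite h1 h3.
have dG : depends (Fn G v) (PA F v :&: PA G v) by move=> s t hst; rewrite -!h1; apply: h2.
have dGi := depends_inter dG h4.
have dG' : depends (Fn G v) (PA F v :&: PA H v).
  apply: depends_sub dGi _; apply/subsetP => u; rewrite !inE.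
  by case/andP=> /andP [-> _] /andP [_ ->].
by move=> s t hst; rewrite !h1; apply: dG'.
Qed.

Lemma simE sg (F G : sys sg) :
  sim F G <-> EnCn F = EnCn G /\ (forall v, v \in EnCn F -> sim_fun F G v).
Proof.
split.
- by case/andP => /eqP -> /forall_inP h; split=> // v; apply: h.
- by case=> E h; apply/andP; split; [rewrite E|apply/forall_inP => v; apply: h].
Qed.

Lemma sim_sym sg (F G : sys sg) : sim F G -> sim G F.
Proof.
case/simE => E h; apply/simE; split=> // v; rewrite -E => vE.
by apply: sim_fun_sym; apply: h.
Qed.

Lemma sim_trans sg (F G H : sys sg) : sim F G -> sim G H -> sim F H.
Proof.
case/simE => E1 h1 /simE [E2 h2]; apply/simE; split; first by rewrite E1 E2.
move=> v vE; apply: sim_fun_trans (h1 _ vE) _; apply: h2; by rewrite -E1.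
Qed.

Lemma sim_refl sg (F : sys sg) : valid F -> sim F F.
Proof.
move=> vF; apply/simE; split=> // v; rewrite inE => /andP [_ vEn].
apply/sim_funE; split=> // s t hst; apply: (valid_dep vF vEn) => u uP.
by apply: hst; rewrite inE uP.
Qed.

Definition good sg (xs : seq (atom sg)) (v : var sg) (w : assn sg) : Prop :=
  (forall a, a \in xs -> exists2 u, u != v & a = Tagged (ran sg) (w u)) /\
  (forall u, u != v -> Tagged (ran sg) (w u) \in xs).

Lemma good_consistent sg xs v (w : assn sg) : good xs v w -> consistent xs.
Proof.
case=> h1 _; apply/allP => a aX; apply/allP => b bX; apply/implyP => /eqP E.
case: (h1 a aX) => u1 _ Ea; case: (h1 b bX) => u2 _ Eb.
move: E; rewrite Ea Eb /= => E; subst u2; by rewrite eqxx.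
Qed.

Lemma good_in_dom sg xs v (w : assn sg) u : good xs v w -> in_dom xs u = (u != v).
Proof.
case=> h1 h2; case: (eqVneq u v) => [->|uv] /=.
- apply/hasP => [[a aX /eqP E]]; case: (h1 a aX) => u' u'v Ea.
  by move: E u'v; rewrite Ea /= => ->; rewrite eqxx.
- by apply/hasP; exists (Tagged (ran sg) (w u)); [apply: h2|].
Qed.

Lemma interv_val sg (G : sys sg) v (w s : assn sg) xs :
  valid G -> good xs v w ->
  interv_assn xs s G v = if v \in En G then Fn G v w else s v.
Proof.
move=> vG gd; have [h1 h2] := gd.
have noself := valid_noself v vG.
pose c : ran sg v := if v \in En G then Fn G v w else s v.
have agree : forall t : assn sg, (forall u, u != v -> t u = w u) -> v \in En G -> Fn G v t = Fn G v w.
  move=> t ht vE; apply: (valid_dep vG vE) => u uP; apply: ht.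
  by apply/eqP => E; move: noself; rewrite -{1}E uP.
pose t := upd w c.
have Ht : interv_cond xs s G t.
  apply/forallP => u; rewrite (good_in_dom u gd).
  case: (eqVneq u v) => [->|uv] /=.
  - rewrite /t upd_at /c; case vE: (v \in En G) => //=.
    by rewrite agree // => u' u'v; rewrite upd_out.
  - by rewrite /t upd_out //; apply: h2.
rewrite /interv_assn; case: pickP => [t' Ht'|H]; last by have := H t; rewrite Ht.
have ag : forall u, u != v -> t' u = w u.
  move=> u uv; move: (forallP Ht' u); rewrite (good_in_dom u gd) uv => /h1 [u' _ E].
  have Et := congr1 tag E; simpl in Et; subst u'.
  exact: eq_from_Tagged E.
move: (forallP Ht' v); rewrite (good_in_dom v gd) eqxx /=.
by case: ifP => vE /eqP -> //; rewrite agree.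
Qed.

Lemma cf_val sg (U : team sg) p xs v (w : assn sg) (c : ran sg v) :
  p \in U -> valid p.2 -> good xs v w -> sat U (FCf xs (FEq c)) ->
  (if v \in En p.2 then Fn p.2 v w else p.1 v) = c.
Proof.
move=> pU vp gd [|] /=; first by rewrite (good_consistent gd).
move=> /(_ (interv_assn xs p.1 p.2, interv_sys xs p.2)) /= <-.
  by rewrite (interv_val p.1 vp gd).
by apply: imset_f.
Qed.

Lemma cf_intro sg (U : team sg) xs v (w : assn sg) (c : ran sg v) :
  good xs v w ->
  (forall p, p \in U -> valid p.2 /\ (if v \in En p.2 then Fn p.2 v w else p.1 v) = c) ->
  sat U (FCf xs (FEq c)).
Proof.
move=> gd h; right => /= q /imsetP [p pU ->] /=.
by case: (h p pU) => vp <-; apply: interv_val.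
Qed.

Lemma bigAnd_map_elim sg (X : eqType) (g : X -> form sg) (l : seq X) (T : team sg) :
  sat T (bigAnd [seq g x | x <- l]) -> forall x, x \in l -> sat T (g x).
Proof. by move=> H x /inP' xl; apply: (bigAnd_elim H); apply: In_map. Qed.

Lemma bigAnd_map_intro sg (X : eqType) (g : X -> form sg) (l : seq X) (T : team sg) x0 :
  x0 \in l -> (forall x, x \in l -> sat T (g x)) -> sat T (bigAnd [seq g x | x <- l]).
Proof.
move=> x0l H; apply: bigAnd_intro.
  by case: l x0l {H}.
move=> a Ha; case: (In_map_inv Ha) => x [/inP' xl ->]; by apply: H.
Qed.

Lemma In_flatten_intro (T : Type) (a : T) l (L : seq (seq T)) :
  In' l L -> In' a l -> In' a (flatten L).
Proof.
elim: L => [|l' L IH] //= [->|H] Ha.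
- elim: l {IH} Ha => [|b l IHl] //= [->|H]; auto.
- elim: l' => [|b l' IHl] //=; auto.
Qed.

Lemma bigAnd_flat_elim sg (X Y : eqType) (g : X -> Y -> form sg) l1 l2 (T : team sg) :
  sat T (bigAnd (flatten [seq [seq g x y | y <- l2] | x <- l1])) ->
  forall x y, x \in l1 -> y \in l2 -> sat T (g x y).
Proof.
move=> H x y /inP' xl /inP' yl; apply: (bigAnd_elim H).
apply: In_flatten_intro; first exact: (In_map (fun x => [seq g x y | y <- l2]) xl).
exact: (In_map (g x) yl).
Qed.

Lemma bigAnd_flat_intro sg (X Y : eqType) (g : X -> Y -> form sg) l1 l2 (T : team sg) x0 y0 :
  x0 \in l1 -> y0 \in l2 -> (forall x y, x \in l1 -> y \in l2 -> sat T (g x y)) ->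
  sat T (bigAnd (flatten [seq [seq g x y | y <- l2] | x <- l1])).
Proof.
move=> /inP' x0l /inP' y0l H; apply: bigAnd_intro.
  move=> E; have := In_flatten_intro (In_map (fun x => [seq g x y | y <- l2]) x0l) (In_map (g x0) y0l).
  by rewrite E.
move=> a Ha; case: (In_flatten Ha) => l [Hl Hal].
case: (In_map_inv Hl) => x [xl El]; subst l.
case: (In_map_inv Hal) => y [yl ->].
by apply: H; apply/inP'.
Qed.

Lemma mem_bigcup_seq sg (X : eqType) (K : X -> team sg) (l : seq X) p :
  (p \in \bigcup_(x <- l) K x) = has (fun x => p \in K x) l.
Proof. elim: l => [|x l IH]; first by rewrite big_nil inE. by rewrite big_cons inE IH. Qed.

Definition a0 sg : assn sg := finfun (fun u => ran0 sg u).

Lemma in_rest sg v (w : assn sg) : upd w (ran0 sg v) \in rest_assns v.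
Proof. by rewrite /rest_assns mem_filter mem_enum upd_at eqxx. Qed.

Lemma upd_same sg (G : sys sg) v w (c : ran sg v) :
  valid G -> v \in En G -> Fn G v (upd w c) = Fn G v w.
Proof.
move=> vG vE; apply: (valid_dep vG vE) => u uP; apply: upd_out.
by apply/eqP => E; move: (valid_noself v vG); rewrite -{1}E uP.
Qed.

Lemma good_eta sg (F : sys sg) v (s : assn sg) : valid F ->
  good ([seq Tagged (ran sg) (s u) | u <- enum (var sg) & (u \notin PA F v) && (u != v)]
         ++ [seq Tagged (ran sg) (s u) | u <- enum (PA F v)]) v s.
Proof.
move=> vF; split.
- move=> a; rewrite mem_cat => /orP [/mapP [u uin ->]|/mapP [u uin ->]]; exists u => //.
  + by move: uin; rewrite mem_filter => /andP [/andP [_ ->]].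
  + rewrite mem_enum in uin; apply/eqP => E; move: (valid_noself v vF).
    by rewrite -{1}E uin.
- move=> u uv; rewrite mem_cat; case: (boolP (u \in PA F v)) => uP.
  + by apply/orP; right; apply: map_f; rewrite mem_enum.
  + by apply/orP; left; apply: map_f; rewrite mem_filter uP uv mem_enum.
Qed.

Lemma good_xi sg v (s : assn sg) :
  good [seq Tagged (ran sg) (s u) | u <- enum (var sg) & u != v] v s.
Proof.
split.
- move=> a /mapP [u uin ->]; exists u => //.
  by move: uin; rewrite mem_filter => /andP [].
- by move=> u uv; apply: map_f; rewrite mem_filter uv mem_enum.
Qed.

Lemma sim_fun_of_eq sg (G F : sys sg) v : valid G -> valid F -> v \in En G -> v \in En F ->
  (forall w, Fn G v w = Fn F v w) -> sim_fun G F v.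
Proof.
move=> vG vF vEG vEF h; apply/sim_funE; split=> //.
apply: depends_inter; first exact: valid_dep.
by move=> s t hst; rewrite !h; apply: (valid_dep vF vEF).
Qed.

Lemma inEnCn sg (F : sys sg) v : (v \in EnCn F) = (v \in En F) && ~~ [forall s : assn sg, forall t : assn sg, Fn F v s == Fn F v t].
Proof. by rewrite /EnCn /Cn !inE; case: (v \in En F); rewrite ?andbT ?andbF. Qed.

Lemma Phi_elim sg (F : sys sg) (T' : team sg) p :
  valid F -> valid p.2 -> p \in T' -> sat T' (Phi F) -> sim p.2 F.
Proof.
move=> vF vG pT H.
have HP : forall v, sat T' (if v \in EnCn F then eta F v else xi v).
  by move=> v; apply: (bigAnd_map_elim H); rewrite mem_enum.
have Heta : forall v, v \in EnCn F -> forall w,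
    (if v \in En p.2 then Fn p.2 v w else p.1 v) = Fn F v w.
  move=> v vE w; have := HP v; rewrite vE /eta => He.
  have := bigAnd_map_elim He (in_rest v w).
  move/(cf_val pT vG (good_eta _ _ vF)).
  have vEF : v \in En F by move: vE; rewrite inEnCn => /andP [].
  rewrite (upd_same _ _ vF vEF); case: ifP => // vEG.
  by rewrite (upd_same _ _ vG vEG).
have Hxi : forall v, v \notin EnCn F -> forall w,
    (if v \in En p.2 then Fn p.2 v w else p.1 v) = p.1 v.
  move=> v vE w; have := HP v; rewrite (negbTE vE) /xi => Hx.
  have := bigAnd_flat_elim Hx (x:=p.1 v) (y:=upd w (ran0 sg v)) _ (in_rest v w).
  rewrite mem_enum => /(_ isT) /= [T1 [T2 [E [H1 H2]]]].
  move: pT; rewrite E inE => /orP [pT|pT].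
    by exfalso; apply: (H1 p pT) => q; rewrite inE => /eqP ->.
  move: (cf_val pT vG (good_xi _ _) H2); case: ifP => // vEG.
  by rewrite (upd_same _ _ vG vEG).
have EE : EnCn p.2 = EnCn F.
  apply/setP => v; case: (boolP (v \in EnCn F)) => vE.
  - have vEF : v \in En F by move: vE; rewrite inEnCn => /andP [].
    have := Heta v vE; case vEG: (v \in En p.2) => h.
    + rewrite inEnCn vEG /=; apply/negP => /forallP hc.
      move: vE; rewrite inEnCn vEF /= => /negP; apply; apply/forallP => s.
      apply/forallP => t; rewrite -!h; exact: (forallP (hc s) t).
    + move: vE; rewrite inEnCn vEF /= => /negP [].
      by apply/forallP => s; apply/forallP => t; rewrite -!h.
  - apply/negbTE; rewrite inEnCn; case vEG: (v \in En p.2) => //=.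
    have := Hxi v vE; rewrite vEG => h.
    by rewrite negbK; apply/forallP => s; apply/forallP => t; rewrite !h.
apply/simE; split=> // v; rewrite EE => vE.
have vEF : v \in En F by move: vE; rewrite inEnCn => /andP [].
have vEG : v \in En p.2 by move: vE; rewrite -EE inEnCn => /andP [].
apply: sim_fun_of_eq => // w; have := Heta v vE w; by rewrite vEG.
Qed.

Lemma Phi_intro sg (F : sys sg) (U : team sg) :
  valid F -> (forall p, p \in U -> [/\ valid p.2, compatible p.1 p.2 & sim p.2 F]) ->
  sat U (Phi F).
Proof.
move=> vF H; apply: (bigAnd_map_intro (x0 := var0 sg)); first by rewrite mem_enum.
move=> v _; case: ifP => vE.
- apply: (bigAnd_map_intro (in_rest v (a0 sg))) => s _.
  apply: cf_intro; first exact: good_eta.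
  move=> p pU; case: (H p pU) => vG _ /simE [EE hs]; split=> //.
  have vEG : v \in En p.2 by move: vE; rewrite -EE inEnCn => /andP [].
  rewrite vEG; rewrite -EE in vE; by case/sim_funE: (hs v vE).
- apply: (bigAnd_flat_intro (x0 := ran0 sg v) _ (in_rest v (a0 sg))); first by rewrite mem_enum.
  move=> x s _ _ /=.
  exists [set p in U | p.1 v != x], [set p in U | p.1 v == x]; split.
    apply/setP => p; rewrite !inE; case: (p \in U); case: (p.1 v == x) => //.
  split.
    move=> p; rewrite inE => /andP [_ px] h; move: px; rewrite (h p) ?inE ?eqxx //.
  apply: cf_intro; first exact: good_xi.
  move=> p; rewrite inE => /andP [pU /eqP px]; case: (H p pU) => vG cG /simE [EE _].
  split=> //; case: ifP => // vEG; rewrite -px.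
  move: vE; rewrite -EE inEnCn vEG /= => /negbFE /forallP hc.
  move: cG => /forallP /(_ v) /implyP /(_ vEG) /eqP ->.
  exact/eqP/(forallP (hc s)).
Qed.

Lemma Theta_elim sg (U : team sg) (A : {set assn sg}) p : sat U (Theta A) -> p \in U -> p.1 \in A.
Proof.
move=> H pU; case: (bigOr_elim H pU) => a [Ha [T' [pT HT]]].
case: (In_map_inv Ha) => s [/inP' sA Es]; subst a.
rewrite mem_enum in sA.
have -> : p.1 = s; last by [].
apply/ffunP => v; exact: (bigAnd_map_elim HT (mem_enum _ v) p pT).
Qed.

Lemma Theta_intro sg (U : team sg) (A : {set assn sg}) : (forall p, p \in U -> p.1 \in A) -> sat U (Theta A).
Proof.
move=> H; apply: (bigOr_intro (K := fun s => [set p in U | p.1 == s])).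
  apply/setP => p; rewrite mem_bigcup_seq; apply/idP/hasP.
  - by move=> pU; exists p.1; [rewrite mem_enum; apply: H|rewrite inE pU eqxx].
  - by case=> s _; rewrite inE => /andP [].
move=> s _; apply: (bigAnd_map_intro (x0 := var0 sg)); first by rewrite mem_enum.
by move=> v _ p; rewrite inE => /andP [_ /eqP ->].
Qed.

Lemma in_Fsigma sg (F : sys sg) : (F \in Fsigma sg) = valid F.
Proof. by rewrite /Fsigma mem_filter mem_enum andbT. Qed.

Lemma key sg (S T : team sg) p : gcteam S -> sat S (bigformula T) -> p \in S ->
  exists F, [/\ valid F, sim p.2 F & p.1 \in Tminus (restrF T F)].
Proof.
move=> gS H pS; rewrite /bigformula in H.
case: (bigOr_elim H pS) => a [Ha [T' [pT HTP]]].
case: (In_map_inv Ha) => F [/inP' FS Ea]; subst a.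
case: HTP => HT HP; rewrite in_Fsigma in FS.
exists F; split=> //; last exact: (Theta_elim HT pT).
by apply: (Phi_elim FS _ pT HP); case: (gS p pS).
Qed.

Theorem corollary4p9 (sg : signature) (S T : team sg) :
  gcteam S -> gcteam T ->
  (sat S (bigformula T) <-> preceq S T).
Proof.
move=> gS gT; split.
- move=> H; right.
  exists [set q in T | [exists p in S, (p.1 == q.1) && sim p.2 q.2]]; split.
    by apply/subsetP => q; rewrite inE => /andP [].
  move=> F vF; apply/setP => s; apply/idP/idP.
  + case/imsetP => p; rewrite inE => /andP [pS spF] ->.
    case: (key gS H pS) => F' [vF' spF' /imsetP [q]].
    rewrite inE => /andP [qT sqF'] E.
    rewrite E; apply: imset_f; rewrite !inE qT /=.
    rewrite (sim_trans sqF' (sim_trans (sim_sym spF') spF)) andbT.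
    apply/exists_inP; exists p => //; rewrite E eqxx /=.
    exact: sim_trans spF' (sim_sym sqF').
  + case/imsetP => q; rewrite !inE => /andP [/andP [qT /exists_inP [p pS /andP [/eqP E spq]]] sqF] ->.
    rewrite -E; apply: imset_f; rewrite inE pS /=.
    exact: sim_trans spq sqF.
- case=> [->|[R [sRT apx]]]; first exact: sat_set0.
  apply: (bigOr_intro (K := fun F => restrF S F)).
    apply/setP => p; rewrite mem_bigcup_seq; apply/idP/hasP.
    + move=> pS; exists p.2; first by rewrite in_Fsigma; case: (gS p pS).
      by rewrite inE pS /=; apply: sim_refl; case: (gS p pS).
    + by case=> F _; rewrite inE => /andP [].
  move=> F; rewrite in_Fsigma => vF /=; split.
  + apply: Theta_intro => p pSF.
    have : p.1 \in Tminus (restrF R F) by rewrite -(apx F vF); apply: imset_f.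
    case/imsetP => q; rewrite inE => /andP [qR sqF] ->.
    by apply: imset_f; rewrite inE sqF (subsetP sRT q qR).
  + apply: Phi_intro => // p; rewrite inE => /andP [pS spF].
    by case: (gS p pS) => v c; split.
Qed.
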